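(* Let $K\subset\mathbb{R}^n$ and $C\subset\mathbb{R}^m$ be nonempty, convex, closed and bounded sets, and let $f,h:\mathbb{R}^n\times\mathbb{R}^m\to\mathbb{R}$ be continuous functions such that, for every $y\in K$, $f(y,\cdot)$ and $h(y,\cdot)$ are convex, and such that $f$ takes only positive values. For every $\varepsilon>0$, the problem $(\mathcal{P}_\varepsilon)$: maximize $f(y,x)$ subject to $y\in K$, $x\in\mathcal{S}_\varepsilon(y)$, admits at least one optimal solution $y_\varepsilon\in K$.
   Context: For $y\in K$ and $\varepsilon>0$, $\mathcal{S}_\varepsilon(y)=\operatorname{argmin}\{h(y,z)+\varepsilon f^2(y,z)\mid z\in C\}$, where $f^2=(f)^2$. A point $y_\varepsilon\in K$ is an optimal solution of $(\mathcal{P}_\varepsilon)$ if $f(y_\varepsilon,x')\ge f(y,x)$ for all $x'\in\mathcal{S}_\varepsilon(y_\varepsilon)$, all $y\in K$ and all $x\in\mathcal{S}_\varepsilon(y)$ (the value $f(y,x)$ does not depend on the choice of $x\in\mathcal{S}_\varepsilon(y)$). *)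

(* Defs.v *)
From HB Require Import structures.
From mathcomp Require Import all_boot all_order all_algebra.
From mathcomp Require Import all_classical all_reals all_analysis.
Set Implicit Arguments. Unset Strict Implicit. Unset Printing Implicit Defensive.
Import Order.TTheory GRing.Theory Num.Theory.
Import numFieldNormedType.Exports.
Local Open Scope classical_set_scope.
Local Open Scope ring_scope.

Definition convex_set_rV (R : realType) (n : nat) (A : set 'rV[R]_n) : Prop :=
  forall x y : 'rV[R]_n, A x -> A y -> forall t : R, 0 <= t -> t <= 1 ->
    A (t *: x + (1 - t) *: y).

Definition convex_fun_rV (R : realType) (m : nat) (g : 'rV[R]_m -> R) : Prop :=
  forall x y : 'rV[R]_m, forall t : R, 0 <= t -> t <= 1 ->
    g (t *: x + (1 - t) *: y) <= t * g x + (1 - t) * g y.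

Definition S_eps (R : realType) (n m : nat) (f h : 'rV[R]_n -> 'rV[R]_m -> R)
  (C : set 'rV[R]_m) (eps : R) (y : 'rV[R]_n) : set 'rV[R]_m :=
  [set z | C z /\ forall z', C z' ->
     h y z + eps * (f y z) ^+ 2 <= h y z' + eps * (f y z') ^+ 2].

Definition optimal_P_eps (R : realType) (n m : nat) (f h : 'rV[R]_n -> 'rV[R]_m -> R)
  (K : set 'rV[R]_n) (C : set 'rV[R]_m) (eps : R) (ye : 'rV[R]_n) : Prop :=
  K ye /\ forall x', S_eps f h C eps ye x' ->
    forall y, K y -> forall x, S_eps f h C eps y x -> f y x <= f ye x'.

(* Main.v *)
Require Import Defs.
From HB Require Import structures.
From mathcomp Require Import all_boot all_order all_algebra.
From mathcomp Require Import all_classical all_reals all_analysis.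
From mathcomp Require Import lra.
Import Order.TTheory GRing.Theory Num.Theory.
Import numFieldNormedType.Exports.
Local Open Scope classical_set_scope.
Local Open Scope ring_scope.

Lemma cont_slice1 (R : realType) (n m : nat) (g : 'rV[R]_n * 'rV[R]_m -> R)
  (z : 'rV[R]_m) : continuous g -> continuous (fun q : 'rV[R]_n * 'rV[R]_m => g (q.1, z)).
Proof.
move=> cg p.
apply: (@cvg_comp2 _ _ _ _ _ (nbhs p.1) (nbhs z) _ _ _ _ fst (fun _ => z)
   (fun a b => g (a,b))).
- exact: cvg_fst.
- exact: cvg_cst.
- have -> : (fun x : _ * _ => g (x.1, x.2)) = g by apply: funext => -[].
  exact: (cg (p.1, z)).
Qed.

Lemma cont_slice2 (R : realType) (n m : nat) (g : 'rV[R]_n * 'rV[R]_m -> R)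
  (y : 'rV[R]_n) : continuous g -> continuous (fun z : 'rV[R]_m => g (y, z)).
Proof.
move=> cg p.
apply: (@continuous_comp _ _ _ (fun z => (y, z)) g); last exact: cg.
exact: (@cvg_pair _ _ _ (nbhs p) (nbhs y) (nbhs p) _ _ _ (fun _ => y) (fun z => z) (cvg_cst y) cvg_id).
Qed.

Lemma closed_le_slice (R : realType) (n m : nat) (g : 'rV[R]_n * 'rV[R]_m -> R)
  (z : 'rV[R]_m) : continuous g -> closed [set p | g p <= g (p.1, z)].
Proof.
move=> cg.
have cv : continuous (fun p : 'rV[R]_n * 'rV[R]_m => g (p.1, z) - g p).
  move=> p; apply: cvgB; last exact: cg.
  exact (@cont_slice1 _ _ _ g z cg p).
have := (continuous_closedP _).1 cv _ (@closed_ge R 0).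
move=> H; rewrite (_ : [set p | g p <= g (p.1, z)] = (fun p : 'rV[R]_n * 'rV[R]_m => g (p.1, z) - g p) @^-1` [set x | 0 <= x]) //.
by apply/seteqP; split => p /=; rewrite subr_ge0.
Qed.

Lemma S_eps_fconst (R : realType) (n m : nat) (C : set 'rV[R]_m)
  (f h : 'rV[R]_n -> 'rV[R]_m -> R) (eps : R) (y : 'rV[R]_n) :
  convex_set_rV C -> convex_fun_rV (f y) -> convex_fun_rV (h y) ->
  (forall x, 0 < f y x) -> 0 < eps ->
  forall z1 z2, S_eps f h C eps y z1 -> S_eps f h C eps y z2 -> f y z1 = f y z2.
Proof.
move=> cC cf ch fpos epos z1 z2 [Cz1 m1] [Cz2 m2].
have t0 : (0 : R) <= 1/2 by lra.
have t1 : (1/2 : R) <= 1 by lra.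
set mid := (1/2) *: z1 + (1 - 1/2) *: z2.
have Cmid : C mid by exact: cC.
have hm := ch z1 z2 _ t0 t1.
have fm := cf z1 z2 _ t0 t1.
have fmp := fpos mid.
have g1m := m1 _ Cmid.
have g12 := m1 _ Cz2.
have g21 := m2 _ Cz1.
move: hm fm fmp g1m g12 g21; rewrite -/mid.
set a := f y z1; set b := f y z2; set c := f y mid.
set h1 := h y z1; set h2 := h y z2; set hc := h y mid.
move=> hm fm fmp g1m g12 g21.
have c2 : c ^+ 2 <= ((a + b) / 2) ^+ 2.
  rewrite !expr2; apply: ler_pM; lra.
have ec2 : eps * c ^+ 2 <= eps * ((a + b) / 2) ^+ 2 by rewrite ler_pM2l.
have : eps * (a - b) ^+ 2 <= 0.
  move: ec2; rewrite !expr2 => ec2.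
  rewrite !expr2 in g1m g12 g21.
  nra.
rewrite pmulr_rle0 // => sq.
have : (a - b) ^+ 2 == 0 by rewrite eq_le sq sqr_ge0.
by rewrite sqrf_eq0 subr_eq0 => /eqP.
Qed.

Theorem theorem2p1 (R : realType) (n m : nat)
  (K : set 'rV[R]_n) (C : set 'rV[R]_m)
  (f h : 'rV[R]_n -> 'rV[R]_m -> R) :
  K !=set0 -> convex_set_rV K -> closed K -> bounded_set K ->
  C !=set0 -> convex_set_rV C -> closed C -> bounded_set C ->
  continuous (fun p : 'rV[R]_n * 'rV[R]_m => f p.1 p.2) ->
  continuous (fun p : 'rV[R]_n * 'rV[R]_m => h p.1 p.2) ->
  (forall y, K y -> convex_fun_rV (f y) /\ convex_fun_rV (h y)) ->
  (forall y x, 0 < f y x) ->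
  forall eps : R, 0 < eps -> exists ye, optimal_P_eps f h K C eps ye.
Proof.
move=> [y0 Ky0] cK clK bK C0 cC clC bC cf ch fconv fpos eps epos.
pose g (p : 'rV[R]_n * 'rV[R]_m) := h p.1 p.2 + eps * (f p.1 p.2 ^+ 2).
have cg : continuous g.
  move=> p; apply: cvgD; first exact: ch.
  apply: cvgM; first exact: cvg_cst.
  rewrite /GRing.exp /=. apply: cvgM; exact: cf.
pose G := (K `*` C) `&` \bigcap_(z in C) [set p | g p <= g (p.1, z)].
have GS : forall y x, G (y, x) <-> K y /\ S_eps f h C eps y x.
  move=> y x; split.
    by move=> [[/= Ky Cx] H]; split => //; split => // z' Cz'; exact: (H z' Cz').
  by move=> [Ky [Cx H]]; split => // z' Cz'; exact: (H z' Cz').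
have compK := bounded_closed_compact bK clK.
have compC := bounded_closed_compact bC clC.
have compG : compact G.
  apply: compact_closedI; first exact: compact_setX.
  apply: closed_bigI => z _; exact: closed_le_slice.
have G0 : G !=set0.
  have cgs : {within C, continuous (fun z => g (y0, z))}.
    apply: continuous_subspaceT => z; exact (@cont_slice2 _ _ _ g y0 cg z).
  have [c /set_mem Cc cmin] := compact_EVT_min C0 compC cgs.
  exists (y0, c); apply/GS; split => //; split => // z' Cz'.
  exact: (cmin z' (mem_set Cz')).
have cfG : {within G, continuous (fun p : 'rV[R]_n * 'rV[R]_m => f p.1 p.2)}.
  exact: continuous_subspaceT.
have [[ye x0] /set_mem /GS [Kye Sx0] pmax] := compact_EVT_max G0 compG cfG.
exists ye; split => // x' Sx' y Ky x Sx.
have [fcv hcv] := fconv ye Kye.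
rewrite -(@S_eps_fconst _ _ _ C f h eps ye cC fcv hcv (fpos ye) epos x0 x') //.
exact: (pmax (y, x) (mem_set (proj2 (GS y x) (conj Ky Sx)))).
Qed.
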